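(* Let $B$ be a nonzero real vector space, $\lfloor\cdot,\cdot\rfloor$ a symmetric bilinear form on $B$, $q(b):=\tfrac12\lfloor b,b\rfloor$. Let $\rho\colon B\to B$ be a linear surjection such that $\lfloor\rho(b),\rho(c)\rfloor=\lfloor b,-c\rfloor$ for all $b,c\in B$, and let $g$ be a BC--function on $B$. Then $g\circ\rho$ and $g\circ(-\rho)$ are TBC--functions, $\rho\,\mathrm{dom}\,(g\circ\rho)=\mathrm{dom}\,g$, $\rho\,{\cal N}_q(g\circ\rho)={\cal P}_q(g)$, $-\rho\,\mathrm{dom}\,(g\circ(-\rho))=\mathrm{dom}\,g$ and $-\rho\,{\cal N}_q(g\circ(-\rho))={\cal P}_q(g)$.
   Context: For a proper convex $f\colon B\to\,]{-}\infty,\infty]$, $\mathrm{dom}\,f:=\{b\colon f(b)\in\mathbb{R}\}$ and $f^@(c):=\sup_{b\in B}[\lfloor b,c\rfloor-f(b)]$. A BC--function is a proper convex $f$ with $f^@(b)\ge f(b)\ge q(b)$ for all $b$; a TBC--function is a proper convex $g$ with $g^@(-b)\ge g(b)\ge -q(b)$ for all $b$. For $h\ge q$, ${\cal P}_q(h):=\{b\colon h(b)=q(b)\}$; for $h\ge -q$, ${\cal N}_q(h):=\{b\colon h(b)=-q(b)\}$. *)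

(* Defs.v *)
From HB Require Import structures.
From mathcomp Require Import all_boot all_order all_algebra.
From mathcomp Require Import all_classical all_reals.
From mathcomp Require Import ereal.
Set Implicit Arguments. Unset Strict Implicit. Unset Printing Implicit Defensive.
Import Order.TTheory GRing.Theory Num.Theory.
Local Open Scope classical_set_scope.
Local Open Scope ring_scope.

Section Defs.
Variables (R : realType) (B : lmodType R).

Definition symmetric_bilinear (bf : B -> B -> R) : Prop :=
  (forall b c, bf b c = bf c b) /\
  (forall a b b' c, bf (a *: b + b') c = a * bf b c + bf b' c) /\
  (forall a b c c', bf b (a *: c + c') = a * bf b c + bf b c').

Definition qf (bf : B -> B -> R) (b : B) : R := bf b b / 2.

Definition dom (f : B -> \bar R) : set B := [set b | f b \is a fin_num].

Definition convex_fun (f : B -> \bar R) : Prop :=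
  forall (x y : B) (t : R), 0 < t -> t < 1 ->
    (f (t *: x + (1 - t) *: y)%R <= t%:E * f x + (1 - t)%:E * f y)%E.

Definition proper_convex (f : B -> \bar R) : Prop :=
  (forall b, f b != -oo%E) /\ dom f !=set0 /\ convex_fun f.

Definition fenchel_at (bf : B -> B -> R) (f : B -> \bar R) (c : B) : \bar R :=
  ereal_sup [set ((bf b c)%:E - f b)%E | b in [set: B]].

Definition BC_fun (bf : B -> B -> R) (f : B -> \bar R) : Prop :=
  proper_convex f /\
  forall b, (fenchel_at bf f b >= f b)%E /\ (f b >= (qf bf b)%:E)%E.

Definition TBC_fun (bf : B -> B -> R) (g : B -> \bar R) : Prop :=
  proper_convex g /\
  forall b, (fenchel_at bf g (- b) >= g b)%E /\ (g b >= (- qf bf b)%:E)%E.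

Definition Pq (bf : B -> B -> R) (h : B -> \bar R) : set B :=
  [set b | h b = (qf bf b)%:E].

Definition Nq (bf : B -> B -> R) (h : B -> \bar R) : set B :=
  [set b | h b = (- qf bf b)%:E].

End Defs.

(* Main.v *)
Require Import Defs.
From HB Require Import structures.
From mathcomp Require Import all_boot all_order all_algebra.
From mathcomp Require Import all_classical all_reals.
From mathcomp Require Import ereal.
Import Order.TTheory GRing.Theory Num.Theory.
Local Open Scope classical_set_scope.
Local Open Scope ring_scope.

Lemma gen_lem (R : realType) (B : lmodType R) (bf : B -> B -> R)
  (f : B -> B) (g : B -> \bar R) :
  symmetric_bilinear bf ->
  (forall (t s : R) x y, f (t *: x + s *: y) = t *: f x + s *: f y) ->
  (forall c : B, exists b : B, f b = c) ->
  (forall b c : B, bf (f b) (f c) = bf b (- c)) ->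
  BC_fun bf g ->
  TBC_fun bf (g \o f) /\ f @` dom (g \o f) = dom g /\
  f @` Nq bf (g \o f) = Pq bf g.
Proof.
move=> [bsym [bl br]] flin fsurj fbf [[gninf [[c0 Hc0] gconv]] Hg].
have bf0 : forall b, bf b 0 = 0.
  move=> b; have := br 1 b 0 0; rewrite scale1r addr0 mul1r.
  by move/(congr1 (fun z => z - bf b 0)); rewrite subrr addrK.
have qfN : forall b, qf bf (f b) = - qf bf b.
  move=> b; rewrite /qf fbf.
  have := br (-1) b b 0; rewrite addr0 bf0 addr0 scaleN1r => ->.
  by rewrite mulN1r mulNr.
split; last split.
- split.
  + split; first by move=> b; apply: gninf.
    split; last first.
      by move=> x y t t0 t1 /=; rewrite flin; apply: gconv.
    by have [b Hb] := fsurj c0; exists b; rewrite /dom /= Hb.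
  + move=> b; split; last by rewrite /= -qfN; have [_ ->] := Hg (f b).
    have -> : fenchel_at bf (g \o f) (- b) = fenchel_at bf g (f b).
      rewrite /fenchel_at; congr ereal_sup.
      apply/seteqP; split => x /=.
        by move=> [c _ <-]; exists (f c) => //; rewrite fbf.
      move=> [d _ <-]; have [c Hc] := fsurj d; exists c => //.
      by rewrite -Hc fbf.
    by have [-> _] := Hg (f b).
- apply/seteqP; split => x /=.
    by move=> [b Hb <-].
  by move=> Hx; have [b Hb] := fsurj x; exists b => //; rewrite /dom /= Hb.
- apply/seteqP; split => x /=.
    by move=> [b Hb <-]; rewrite /Pq /= qfN; exact: Hb.
  move=> Hx; have [b Hb] := fsurj x; exists b => //.
  by rewrite /Nq /= -qfN Hb; exact: Hx.
Qed.

Theorem lemma3p14 (R : realType) (B : lmodType R) (bf : B -> B -> R)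
  (rho : {linear B -> B}) (g : B -> \bar R) :
  (exists b : B, b != 0) ->
  symmetric_bilinear bf ->
  (forall c : B, exists b : B, rho b = c) ->
  (forall b c : B, bf (rho b) (rho c) = bf b (- c)) ->
  BC_fun bf g ->
  TBC_fun bf (g \o rho) /\
      TBC_fun bf (g \o (fun b => - rho b)) /\
      rho @` dom (g \o rho) = dom g /\
      rho @` Nq bf (g \o rho) = Pq bf g /\
      (fun b => - rho b) @` dom (g \o (fun b => - rho b)) = dom g /\
      (fun b => - rho b) @` Nq bf (g \o (fun b => - rho b)) = Pq bf g.
Proof.
move=> _ hb hs hr hg.
have l1 : forall (t s : R) x y, rho (t *: x + s *: y) = t *: rho x + s *: rho y.
  by move=> t s x y; rewrite linearD !linearZ.
have l2 : forall (t s : R) x y, - rho (t *: x + s *: y) = t *: - rho x + s *: - rho y.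
  by move=> t s x y; rewrite l1 opprD -!scalerN.
have s2 : forall c : B, exists b : B, - rho b = c.
  by move=> c; have [b Hb] := hs (- c); exists b; rewrite Hb opprK.
have r2 : forall b c : B, bf (- rho b) (- rho c) = bf b (- c).
  move=> b c; rewrite -(hr b c); case: hb => _ [bl br].
  have := bl (-1) (rho b) 0 (- rho c); rewrite addr0 scaleN1r => ->.
  have := br (-1) (rho b) (rho c) 0; rewrite addr0 scaleN1r => ->.
  have e0 : bf 0 (- rho c) = 0.
    have := bl 1 0 0 (- rho c); rewrite scale1r addr0 mul1r.
    by move/(congr1 (fun z => z - bf 0 (- rho c))); rewrite subrr addrK.
  have e1 : bf (rho b) 0 = 0.
    have := br 1 (rho b) 0 0; rewrite scale1r addr0 mul1r.
    by move/(congr1 (fun z => z - bf (rho b) 0)); rewrite subrr addrK.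
  by rewrite e0 e1 !addr0 mulN1r mulNr mul1r opprK.
have [A1 [A2 A3]] := @gen_lem R B bf rho g hb l1 hs hr hg.
have [C1 [C2 C3]] := @gen_lem R B bf (fun b => - rho b) g hb l2 s2 r2 hg.
split; first exact: A1. split; first exact: C1.
split; first exact: A2. split; first exact: A3.
by split; [exact: C2 | exact: C3].
Qed.
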